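(* Let $n\ge3$ and let $E$ be a closed subset of the unit ball $B_1\subset\mathbb{R}^n$ with $0\in E$ and $B_{1/4}\setminus E\neq\emptyset$. Assume there do NOT exist a point $x_0$, sequences $x_k,y_k,z_k\in B_{1/2}$, and constants $a>1$, $\beta>0$ such that: (1) $x_k,y_k\in E$, $z_k\notin E$, and $x_k,y_k,z_k\to x_0$; (2) with $r_k=|x_k-y_k|$, one has $\frac1ar_k<|x_k-z_k|<ar_k$ and $\frac1ar_k<|y_k-z_k|<ar_k$ for all $k$; (3) $V(x_k,B_{\beta r_k}(z_k))\subset B_1\setminus E$ and $V(y_k,B_{\beta r_k}(z_k))\subset B_1\setminus E$ for all $k$. Then $E\cap B_{1/4}$ is a finite set.
   Context: $B_r(x)$ is the Euclidean ball of radius $r$ centered at $x$, $B_r=B_r(0)$. For $x\in\mathbb{R}^n$ and a ball $B_r(x')$, $V(x,B_r(x'))=\{(1-t)x+ty:t\in(0,1),\ y\in B_r(x')\}$. *)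

(* Defs.v *)
From HB Require Import structures.
From mathcomp Require Import all_boot all_order all_algebra.
From mathcomp Require Import all_classical all_reals all_analysis.
Set Implicit Arguments. Unset Strict Implicit. Unset Printing Implicit Defensive.
Import Order.TTheory GRing.Theory Num.Theory.
Import numFieldNormedType.Exports.
Local Open Scope classical_set_scope.
Local Open Scope ring_scope.

(* Points of R^n are row vectors 'rV[R]_n (topology = product topology,
   i.e. the usual Euclidean topology). *)

Definition enorm (R : realType) (n : nat) (x : 'rV[R]_n) : R :=
  Num.sqrt (\sum_(i < n) (x ord0 i) ^+ 2).

Definition euclid_dist (R : realType) (n : nat) (x y : 'rV[R]_n) : R := enorm (x - y).

Definition eball (R : realType) (n : nat) (c : 'rV[R]_n) (r : R) : set 'rV[R]_n :=
  [set y | euclid_dist y c < r].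

Definition Vcone (R : realType) (n : nat) (x c : 'rV[R]_n) (r : R) : set 'rV[R]_n :=
  [set w | exists t : R, exists y : 'rV[R]_n,
     0 < t /\ t < 1 /\ eball c r y /\ w = (1 - t) *: x + t *: y].

(* Main.v *)
Require Import Defs.
From HB Require Import structures.
From mathcomp Require Import all_boot all_order all_algebra.
From mathcomp Require Import all_classical all_reals all_analysis.
From mathcomp Require Import ring lra.
Import Order.TTheory GRing.Theory Num.Theory.
Import numFieldNormedType.Exports.
Local Open Scope classical_set_scope.
Local Open Scope ring_scope.


Section Eucl.
Context {R : realType} {n : nat}.
Local Notation V := 'rV[R]_n.
Implicit Types u v w a b c : V.

Definition dot u v : R := \sum_(i < n) u ord0 i * v ord0 i.

Lemma dotC u v : dot u v = dot v u.
Proof. by apply: eq_bigr => i _; rewrite mulrC. Qed.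

Lemma dotDl u v w : dot (u + v) w = dot u w + dot v w.
Proof. by rewrite /dot -big_split; apply: eq_bigr => i _; rewrite mxE mulrDl. Qed.

Lemma dotZl (c : R) u v : dot (c *: u) v = c * dot u v.
Proof. by rewrite /dot mulr_sumr; apply: eq_bigr => i _; rewrite mxE mulrA. Qed.

Lemma dotNl u v : dot (- u) v = - dot u v.
Proof. by rewrite -scaleN1r dotZl mulN1r. Qed.

Lemma dotBl u v w : dot (u - v) w = dot u w - dot v w.
Proof. by rewrite dotDl dotNl. Qed.

Lemma dotDr u v w : dot w (u + v) = dot w u + dot w v.
Proof. by rewrite dotC dotDl !(dotC w). Qed.

Lemma dotZr (c : R) u v : dot v (c *: u) = c * dot v u.
Proof. by rewrite dotC dotZl dotC. Qed.

Lemma dotBr u v w : dot w (u - v) = dot w u - dot w v.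
Proof. by rewrite dotC dotBl !(dotC w). Qed.

Lemma dot0l u : dot 0 u = 0.
Proof. by rewrite /dot big1 // => i _; rewrite mxE mul0r. Qed.

Lemma dot_ge0 u : 0 <= dot u u.
Proof. by apply: sumr_ge0 => i _; rewrite -expr2 sqr_ge0. Qed.

Lemma dot_eq0 u : dot u u = 0 -> u = 0.
Proof.
move=> /eqP; rewrite psumr_eq0; last by move=> i _; rewrite -expr2 sqr_ge0.
move=> /allP H; apply/rowP => i; rewrite mxE.
have /H : i \in index_enum 'I_n by rewrite mem_index_enum.
by rewrite -expr2 sqrf_eq0 => /eqP.
Qed.

Lemma enormE u : enorm u = Num.sqrt (dot u u).
Proof. by rewrite /enorm /dot; congr Num.sqrt; apply: eq_bigr => i _; rewrite expr2. Qed.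

Lemma enorm_ge0 u : 0 <= enorm u.
Proof. by rewrite enormE sqrtr_ge0. Qed.

Lemma enorm_sqr u : enorm u ^+ 2 = dot u u.
Proof. by rewrite enormE sqr_sqrtr // dot_ge0. Qed.

Lemma enorm0 : enorm (0 : V) = 0.
Proof. by rewrite enormE dot0l sqrtr0. Qed.

Lemma enorm_eq0 u : enorm u = 0 -> u = 0.
Proof. by move=> h; apply: dot_eq0; rewrite -enorm_sqr h expr2 mulr0. Qed.

Lemma enormZ (c : R) u : enorm (c *: u) = `|c| * enorm u.
Proof.
by rewrite !enormE dotZl dotZr mulrA sqrtrM ?sqr_ge0 // -expr2 sqrtr_sqr.
Qed.

Lemma enormN u : enorm (- u) = enorm u.
Proof. by rewrite -scaleN1r enormZ normrN1 mul1r. Qed.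

Lemma enormB u v : enorm (u - v) = enorm (v - u).
Proof. by rewrite -enormN opprB. Qed.

Lemma enorm_le u v : enorm u <= enorm v <-> dot u u <= dot v v.
Proof.
by rewrite -!enorm_sqr ler_sqr ?nnegrE ?enorm_ge0.
Qed.

Lemma cauchy_schwarz u v : dot u v <= enorm u * enorm v.
Proof.
set a := enorm u; set b := enorm v.
have a0 : 0 <= a by exact: enorm_ge0.
have b0 : 0 <= b by exact: enorm_ge0.
have H := dot_ge0 (b *: u - a *: v).
rewrite dotBl !dotBr !dotZl !dotZr -!enorm_sqr -/a -/b (dotC v u) in H.
have [ab0|abgt0] := eqVneq (a * b) 0.
  move/eqP: ab0; rewrite mulf_eq0 => /orP[/eqP|/eqP] h.
    by rewrite (enorm_eq0 _ h) dot0l h mul0r.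
  by rewrite (enorm_eq0 _ h) dotC dot0l h mulr0.
have abp : 0 < a * b by rewrite lt0r abgt0 mulr_ge0.
have : (a * b) * (2 * dot u v) <= (a * b) * (2 * (a * b)) by nra.
by rewrite ler_pM2l //; nra.
Qed.

Lemma enormD u v : enorm (u + v) <= enorm u + enorm v.
Proof.
rewrite -ler_sqr ?nnegrE ?addr_ge0 ?enorm_ge0 //.
rewrite enorm_sqr dotDl !dotDr sqrrD -!enorm_sqr (dotC v u).
have := cauchy_schwarz u v; lra.
Qed.

Lemma enorm_tri a b c : enorm (a - c) <= enorm (a - b) + enorm (b - c).
Proof. by have := enormD (a - b) (b - c); rewrite addrA subrK. Qed.

Lemma enorm_rev a b c : enorm (a - b) - enorm (a - c) <= enorm (b - c).
Proof. have := enorm_tri a c b; rewrite (enormB c b); lra. Qed.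

End Eucl.


Section Topo.
Context {R : realType} {n : nat}.
Local Notation V := 'rV[R]_n.
Implicit Types u v w a b c : V.

Lemma mxnormE u : `|u| = \big[Num.max/0]_ij `|u ij.1 ij.2|.
Proof. exact: mx_normrE. Qed.

Lemma coord_le_mx u (i : 'I_n) : `|u ord0 i| <= `|u|.
Proof.
rewrite mxnormE.
exact: (@le_bigmax _ _ _ 0 (fun ij : 'I_1 * 'I_n => `|u ij.1 ij.2|) (ord0, i)).
Qed.

Lemma mx_le_enorm u : `|u| <= enorm u.
Proof.
rewrite mxnormE; apply: bigmax_le; first exact: enorm_ge0.
move=> [j i] _ /=; rewrite (ord1 j).
rewrite -ler_sqr ?nnegrE ?enorm_ge0 // enorm_sqr /dot.
rewrite (bigD1 i) //= -expr2 real_normK ?num_real //.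
rewrite lerDl; apply: sumr_ge0 => k _; rewrite -expr2 sqr_ge0 //.
Qed.

Lemma enorm_le_mx u : enorm u <= n%:R * `|u|.
Proof.
have M0 : 0 <= `|u| by [].
have H : dot u u <= n%:R * `|u| ^+ 2.
  rewrite /dot -[n in n%:R]card_ord -sum1_card natr_sum mulr_suml.
  apply: ler_sum => i _; rewrite mul1r -expr2 -real_normK ?num_real //.
  by rewrite lerXn2r ?nnegrE ?coord_le_mx.
case: n u M0 H => [|m] u M0 H.
  by rewrite enormE /dot big_ord0 sqrtr0 mul0r.
rewrite -ler_sqr ?nnegrE ?enorm_ge0 ?mulr_ge0 // enorm_sqr.
apply: (le_trans H); rewrite exprMn ler_wpM2r ?exprn_ge0 //.
rewrite expr2 ler_peMl ?ler0n // ler1n //.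
Qed.

Lemma enorm_cont (q : V) : continuous (fun e : V => enorm (q - e)).
Proof.
move=> x; apply/(@cvgrPdist_lt _ _ _ _ (nbhs_filter x)) => eps eps0.
have np : 0 < n%:R + 1 :> R by rewrite ltr_pwDr // ler0n.
apply/nbhs_ballP; exists (eps / (n%:R + 1)); first exact: divr_gt0.
move=> y; rewrite -ball_normE /= => h.
have H1 := enorm_rev q x y.
have H2 := enorm_rev q y x.
rewrite (enormB y x) in H2.
have : enorm (x - y) < eps.
  apply: (le_lt_trans (enorm_le_mx _)).
  apply: (le_lt_trans (y := (n%:R + 1) * `|x - y|)).
    by rewrite ler_wpM2r // lerDl.
  by rewrite -ltr_pdivlMl // mulrC.
move=> h'; rewrite ltr_norml; apply/andP; split; lra.
Qed.

Lemma nearest_ex (E : set V) (q : V) : closed E -> E `<=` eball 0 1 -> E !=set0 ->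
  exists y, E y /\ forall e, E e -> enorm (q - y) <= enorm (q - e).
Proof.
move=> Ecl Eb E0.
have bE : bounded_set E.
  exists 1; split => // M M1 x Ex /=.
  apply: (le_trans (mx_le_enorm x)); apply/ltW/(lt_trans _ M1).
  by move/Eb: Ex; rewrite /eball /euclid_dist /= subr0.
have cE := bounded_closed_compact bE Ecl.
have [c cE' hc] := EVT_min_rV E0 cE (continuous_subspaceT (enorm_cont q)).
exists c; split; first by rewrite inE in cE'.
by move=> e Ee; apply: hc; rewrite inE.
Qed.

Lemma eopen (S : set V) :
  (forall w, S w -> exists2 e, 0 < e & forall w', enorm (w' - w) < e -> S w') -> open S.
Proof.
move=> h; rewrite openE => w Sw; have [e e0 he] := h w Sw.
have np : 0 < n%:R + 1 :> R by rewrite ltr_pwDr // ler0n.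
apply/nbhs_ballP; exists (e / (n%:R + 1)); first exact: divr_gt0.
move=> y; rewrite -ball_normE /= => hy; apply: he.
rewrite enormB; apply: (le_lt_trans (enorm_le_mx _)).
apply: (le_lt_trans (y := (n%:R + 1) * `|w - y|)).
  by rewrite ler_wpM2r // lerDl.
by rewrite -ltr_pdivlMl // mulrC.
Qed.

Lemma eclosed_lim (S : set V) (b : V) : closed S ->
  (forall e, 0 < e -> exists w, S w /\ enorm (w - b) < e) -> S b.
Proof.
move=> Scl h; apply: Scl => B /nbhs_ballP [e e0 hB].
have [w [Sw hw]] := h e e0.
exists w; split => //; apply: hB; rewrite -ball_normE /=.
by apply: (le_lt_trans (mx_le_enorm _)); rewrite enormB.
Qed.

Lemma ecvg (f : nat -> V) (x0 : V) (C : R) :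
  (forall k, enorm (f k - x0) <= C / (k.+1)%:R) -> f @ \oo --> x0.
Proof.
move=> h; apply/cvgrPdist_lt => eps eps0.
have := nbhs_infty_ger (C / eps); apply: filterS => k hk.
apply: (le_lt_trans (mx_le_enorm _)); rewrite enormB.
apply: (le_lt_trans (h k)).
have kp : 0 < (k.+1)%:R :> R by rewrite ltr0n.
rewrite ltr_pdivrMr // -ltr_pdivrMl // mulrC.
by apply: (le_lt_trans hk); rewrite ltr_nat.
Qed.
End Topo.

Section Geo.
Context {R : realType} {n : nat}.
Local Notation V := 'rV[R]_n.
Implicit Types u v w a b c p q x y : V.

Definition nearest (E : set V) q y := E y /\ forall e, E e -> enorm (q - y) <= enorm (q - e).
Definition Good (E : set V) q x (D : R) := forall y, nearest E q y -> enorm (y - x) <= D.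
Definition Afz : R := 100 * 100.
Definition frozen_at (E : set V) p := forall x p' y, nearest E p x ->
  enorm (p' - p) < enorm (p - x) / 4 -> nearest E p' y -> enorm (x - y) < enorm (p - x) / Afz.
Definition FR (E : set V) (x0 : V) (d0 : R) :=
  forall p, ~ E p -> enorm (p - x0) < d0 -> frozen_at E p.

Lemma Afz_gt0 : 0 < Afz. Proof. by rewrite /Afz mulr_gt0. Qed.

Lemma enorm_subrr u : enorm (u - u) = 0.
Proof. by rewrite subrr enorm0. Qed.

Lemma nearest_self (E : set V) q : E q -> nearest E q q.
Proof. by move=> Eq; split => // e _; rewrite enorm_subrr enorm_ge0. Qed.

Lemma Good_mono (E : set V) q x D D' : Good E q x D -> D <= D' -> Good E q x D'.
Proof. by move=> h hD y /h; move/le_trans; apply. Qed.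

Context (E : set V) (NE : forall q, exists y, nearest E q y).

Lemma G1 x0 d0 q q' x D : FR E x0 d0 -> enorm (q - x0) < d0 -> Good E q x D ->
  D < enorm (q - x) -> enorm (q' - q) < (enorm (q - x) - D) / 4 ->
  Good E q' x (D + (enorm (q - x) + D) / Afz).
Proof.
move=> fr qx0 G Dq step.
have nEq : ~ E q.
  by move=> Eq; have := G _ (@nearest_self E q Eq); lra.
have [y ny] := NE q.
have yx := G _ ny.
have t1 := enorm_tri q y x.
have t2 := enorm_tri q x y.
rewrite (enormB x y) in t2.
move=> y' ny'.
have := fr q nEq qx0 y q' y' ny.
have h1 : enorm (q' - q) < enorm (q - y) / 4 by lra.
move=> /(_ h1 ny') h2.
have t3 := enorm_tri y' y x; rewrite (enormB y' y) in t3.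
have A0 := Afz_gt0.
have : enorm (q - y) / Afz <= (enorm (q - x) + D) / Afz by rewrite ler_pM2r ?invr_gt0 //; lra.
lra.
Qed.

Lemma dot_chord (u v : V) (l : R) : dot (u + l *: (v - u)) (u + l *: (v - u)) =
  dot u u + 2 * l * (dot u v - dot u u) + l ^+ 2 * (dot u u + dot v v - 2 * dot u v).
Proof.
rewrite !dotDl !dotDr !dotZl !dotZr !dotBl !dotBr (dotC v u); ring.
Qed.

Lemma sq_le_enorm (w : V) (s : R) : 0 <= s -> s ^+ 2 <= dot w w -> s <= enorm w.
Proof. by move=> s0 h; rewrite -ler_sqr ?nnegrE ?enorm_ge0 // enorm_sqr. Qed.

Lemma enorm_le_sq (w : V) (s : R) : 0 <= s -> dot w w <= s ^+ 2 -> enorm w <= s.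
Proof. by move=> s0 h; rewrite -ler_sqr ?nnegrE ?enorm_ge0 // enorm_sqr. Qed.

Lemma chord_lower (u v : V) (t l : R) : enorm u = t -> enorm v = t -> 0 <= dot u v ->
  0 <= l <= 1 -> 7 * t / 10 <= enorm (u + l *: (v - u)).
Proof.
move=> hu hv d0 /andP[l0 l1].
have t0 : 0 <= t by rewrite -hu enorm_ge0.
apply: sq_le_enorm; first lra.
rewrite dot_chord -!enorm_sqr hu hv.
have h1 : 0 <= l * (1 - l) * dot u v by rewrite mulr_ge0 // mulr_ge0 //; lra.
have h2 : 0 <= t ^+ 2 * (l - 1/2) ^+ 2 by rewrite mulr_ge0 // sqr_ge0.
nra.
Qed.

Lemma chord_upper (u v : V) (t l : R) : enorm u = t -> enorm v = t ->
  0 <= l <= 1 -> enorm (u + l *: (v - u)) <= t.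
Proof.
move=> hu hv /andP[l0 l1].
have -> : u + l *: (v - u) = (1 - l) *: u + l *: v.
  by rewrite scalerBr scalerBl scale1r addrA addrAC.
apply: (le_trans (enormD _ _)); rewrite !enormZ hu hv !ger0_norm //; lra.
Qed.

Lemma enorm_diff_le (u v : V) (t : R) : enorm u = t -> enorm v = t -> 0 <= dot u v ->
  enorm (v - u) <= 3 * t / 2.
Proof.
move=> hu hv d0; have t0 : 0 <= t by rewrite -hu enorm_ge0.
apply: enorm_le_sq; first lra.
rewrite dotBl !dotBr -!enorm_sqr hu hv (dotC v u).
nra.
Qed.


Lemma chord_id (a b x : V) (l : R) : a + l *: (b - a) - x = (a - x) + l *: ((b - x) - (a - x)).
Proof.
have -> : (b - x) - (a - x) = b - a by rewrite opprB addrA subrK.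
by rewrite addrAC.
Qed.

Lemma step_id (a b : V) (l1 l0 : R) : (a + l1 *: (b - a)) - (a + l0 *: (b - a)) = (l1 - l0) *: (b - a).
Proof. by rewrite opprD addrACA subrr add0r scalerBl. Qed.

Definition chpt (a b : V) (k : nat) := a + (k%:R / 16) *: (b - a).

Lemma ar1 (a b c t d0 : R) : a <= b + c -> b <= t -> c + t < d0 -> a < d0.
Proof. lra. Qed.

Lemma ar2 (D kt t e : R) : 0 < t -> D <= t / 10 -> kt <= 16 * t -> 7 * t / 10 <= e ->
  D + kt / 4000 < e.
Proof. lra. Qed.

Lemma ar3 (D kt t e eb : R) : 0 < t -> D <= t / 10 -> kt <= 16 * t -> 7 * t / 10 <= e ->
  eb <= 3 * t / 2 -> 1 / 16 * eb < (e - (D + kt / 4000)) / 4.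
Proof. lra. Qed.

Lemma ar4 (D kt t e : R) : 0 < t -> D <= t / 10 -> kt <= 16 * t -> e <= t ->
  (e + (D + kt / 4000)) / Afz <= t / 4000.
Proof. move=> *; rewrite ler_pdivrMr ?Afz_gt0 // /Afz; lra. Qed.

Lemma G2 x0 d0 x a b t D : FR E x0 d0 -> 0 < t -> enorm (a - x) = t -> enorm (b - x) = t ->
  0 <= dot (a - x) (b - x) -> Good E a x D -> 0 <= D -> D <= t / 10 ->
  enorm (x - x0) + t < d0 -> Good E b x (D + t / 250).
Proof.
move=> fr t0 ha hb d0' Ga D0 Dt reg.
have lk : forall k, (k <= 16)%N -> (0 <= k%:R / 16 :> R) && (k%:R / 16 <= 1 :> R).
  move=> k k16; rewrite divr_ge0 //= ler_pdivrMr // mul1r ler_nat //.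
have qx : forall k, (k <= 16)%N -> 7 * t / 10 <= enorm (chpt a b k - x) /\ enorm (chpt a b k - x) <= t.
  move=> k k16; rewrite /chpt chord_id; split.
    exact: chord_lower _ _ _ _ ha hb d0' (lk k k16).
  exact: chord_upper _ _ _ _ ha hb (lk k k16).
have ba : enorm (b - a) <= 3 * t / 2.
  have := enorm_diff_le _ _ _ ha hb d0'; by rewrite opprB addrA subrK.
have claim : forall k, (k <= 16)%N -> Good E (chpt a b k) x (D + k%:R * t / 4000).
  elim => [_|k IH k16].
    by rewrite /chpt mul0r scale0r addr0 mul0r mul0r addr0.
  have k16' : (k <= 16)%N by apply: leq_trans k16.
  have [q1 q2] := qx k k16'.
  have IHk := IH k16'.
  have kt : k%:R * t <= 16 * t by rewrite ler_pM2r // ler_nat.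
  have G := @G1 x0 d0 (chpt a b k) (chpt a b k.+1) x (D + k%:R * t / 4000) fr.
  have r1 : enorm (chpt a b k - x0) < d0.
    exact: ar1 _ _ _ _ _ (enorm_tri (chpt a b k) x x0) q2 reg.
  have r2 : D + k%:R * t / 4000 < enorm (chpt a b k - x).
    exact: (ar2 _ _ _ _ t0 Dt kt q1).
  have r3 : enorm (chpt a b k.+1 - chpt a b k) <
      (enorm (chpt a b k - x) - (D + k%:R * t / 4000)) / 4.
    rewrite /chpt step_id enormZ -mulrBl -natrB // subSnn ger0_norm //.
    exact: (ar3 _ _ _ _ _ t0 Dt kt q1 ba).
  apply: Good_mono (G r1 IHk r2 r3) _.
  have h := ar4 _ _ _ _ t0 Dt kt q2.
  apply: (le_trans (lerD (lexx _) h)).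
  have -> : (k.+1)%:R = k%:R + 1 :> R by rewrite mulrSr.
  by rewrite mulrDl mul1r -!addrA lerD2l mulrDl.
have := claim 16%N (leqnn _).
rewrite /chpt divff // scale1r addrC subrK.
have -> : 16%:R * t / 4000 = t / 250 :> R by field.
by [].
Qed.

Lemma dotNr (u v : V) : dot u (- v) = - dot u v.
Proof. by rewrite -scaleN1r dotZr mulN1r. Qed.

Lemma dot_sum_ge0 (u v : V) t : enorm u = t -> enorm v = t -> 0 <= t ^+ 2 + dot u v.
Proof.
move=> hu hv; have := cauchy_schwarz u (- v).
by rewrite dotNr enormN hu hv -expr2 => h; rewrite -(opprK (dot u v)) subr_ge0.
Qed.

Lemma addK_vec (x w : V) : x + w - x = w.
Proof. by rewrite [x + _]addrC addrK. Qed.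

Lemma G3 x0 d0 x a b t D : FR E x0 d0 -> 0 < t -> enorm (a - x) = t -> enorm (b - x) = t ->
  (a - x) + (b - x) != 0 -> Good E a x D -> 0 <= D -> D <= t / 20 ->
  enorm (x - x0) + t < d0 -> Good E b x (D + t / 250 + t / 250).
Proof.
move=> fr t0 ha hb uv Ga D0 Dt reg.
set u := a - x in ha uv; set v := b - x in hb uv.
set s := enorm (u + v).
have s0 : 0 < s.
  rewrite lt0r enorm_ge0 andbT; apply/eqP => h; move/eqP: uv; apply.
  exact: enorm_eq0 _ h.
pose c := x + (t / s) *: (u + v).
have cx : c - x = (t / s) *: (u + v) by rewrite /c addK_vec.
have hc : enorm (c - x) = t.
  rewrite cx enormZ -/s ger0_norm ?divr_ge0 ?ltW //.
  by rewrite -mulrA mulVf ?mulr1 // gt_eqF.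
have ts0 : 0 <= t / s by rewrite divr_ge0 // ltW.
have d1 : 0 <= dot u (c - x).
  rewrite cx dotZr dotDr -enorm_sqr ha mulr_ge0 //.
  exact (dot_sum_ge0 _ _ _ ha hb).
have d2 : 0 <= dot (c - x) v.
  rewrite cx dotZl dotDl -(enorm_sqr v) hb mulr_ge0 // addrC dotC.
  exact: dot_sum_ge0 _ _ _ hb ha.
have a5 : D <= t / 10 by apply: (le_trans Dt); rewrite ler_pM2l // ltW // ltf_pV2 ?posrE //; lra.
have Gc := G2 x0 d0 x a c t D fr t0 ha hc d1 Ga D0 a5 reg.
have a6 : D + t / 250 <= t / 10 by move: Dt t0; clear; lra.
have a7 : 0 <= D + t / 250 by move: D0 t0; clear; lra.
exact: (G2 x0 d0 x c b t (D + t / 250) fr t0 hc hb d2 Gc a7 a6 reg).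
Qed.

Definition bvec (i : 'I_n) : V := delta_mx ord0 i.

Lemma bvec_coord (i j : 'I_n) : bvec i ord0 j = (j == i)%:R.
Proof. by rewrite /bvec mxE eqxx. Qed.

Lemma enorm_bvec (i : 'I_n) : enorm (bvec i) = 1.
Proof.
rewrite enormE /dot (bigD1 i) //= big1 ?addr0 ?bvec_coord ?eqxx ?mulr1 ?sqrtr1 //.
by move=> j /negbTE ji; rewrite bvec_coord ji mul0r.
Qed.

Lemma coordD (u v : V) j : (u + v) ord0 j = u ord0 j + v ord0 j.
Proof. by rewrite mxE. Qed.
Lemma coordN (u : V) j : (- u) ord0 j = - u ord0 j.
Proof. by rewrite mxE. Qed.
Lemma coordZ (c : R) (u : V) j : (c *: u) ord0 j = c * u ord0 j.
Proof. by rewrite mxE. Qed.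

Lemma vec_neq0 (w : V) (i : 'I_n) : w ord0 i != 0 -> w != 0.
Proof. by apply: contra => /eqP ->; rewrite mxE. Qed.

Lemma basis_choice (u : V) t : (1 < n)%N -> 0 < t ->
  exists i, u + t *: bvec i != 0 /\ t *: bvec i - u != 0.
Proof.
move=> hn t0.
have n0 : (0 < n)%N by apply: ltn_trans hn.
pose i0 : 'I_n := Ordinal n0.
pose i1 : 'I_n := Ordinal hn.
have i01 : (i0 == i1) = false by [].
have tn0 : t != 0 by rewrite gt_eqF.
case: (eqVneq (u + t *: bvec i1) 0) => h1.
  have hu : u = - (t *: bvec i1) by rewrite -(subr0 u) -h1 opprD addrA subrr add0r.
  apply: (ex_intro _ i0); split; apply: (@vec_neq0 _ i0);
    rewrite ?coordD ?coordN hu ?coordN !coordZ !bvec_coord i01 eqxx mulr0 ?oppr0 ?add0r ?subr0 ?addr0 mulr1 ?addr0 ?subr0 //.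
have [h2|h2] := eqVneq (t *: bvec i1 - u) 0; last first.
  exact: (ex_intro _ i1 (conj h1 h2)).
have hu : u = t *: bvec i1 by apply/eqP; rewrite eq_sym -subr_eq0 h2.
apply: (ex_intro _ i0); split; apply: (@vec_neq0 _ i0);
  rewrite ?coordD ?coordN hu ?coordN !coordZ !bvec_coord i01 eqxx mulr0 ?oppr0 ?add0r ?subr0 ?addr0 mulr1 ?addr0 ?subr0 //.
Qed.

Lemma G4 x0 d0 x a b t D : (1 < n)%N -> FR E x0 d0 -> 0 < t -> enorm (a - x) = t ->
  enorm (b - x) = t -> Good E a x D -> 0 <= D -> D <= t / 100 ->
  enorm (x - x0) + t < d0 -> Good E b x (D + t / 50).
Proof.
move=> hn fr t0 ha hb Ga D0 Dt reg.
have a1 : D <= t / 20 by move: Dt t0; clear; lra.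
case: (eqVneq ((a - x) + (b - x)) 0) => uv; last first.
  apply: Good_mono (G3 x0 d0 x a b t D fr t0 ha hb uv Ga D0 a1 reg) _.
  by move: t0; clear; lra.
have [i [h1 h2]] := basis_choice (a - x) t hn t0.
pose c := x + t *: bvec i.
have cx : c - x = t *: bvec i by rewrite /c addK_vec.
have hc : enorm (c - x) = t by rewrite cx enormZ enorm_bvec mulr1 gtr0_norm.
have e1 : (a - x) + (c - x) != 0 by rewrite cx.
have Gc := G3 x0 d0 x a c t D fr t0 ha hc e1 Ga D0 a1 reg.
have hbx : b - x = - (a - x).
  by rewrite -(subr0 (b - x)) -uv opprD addrA addrC addrA addNr add0r.
have a2 : 0 <= D + t / 250 + t / 250 by move: D0 t0; clear; lra.
have a3 : D + t / 250 + t / 250 <= t / 20 by move: Dt t0; clear; lra.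
have e2 : (c - x) + (b - x) != 0 by rewrite cx hbx.
have Gb := G3 x0 d0 x c b t _ fr t0 hc hb e2 Gc a2 a3 reg.
apply: Good_mono Gb _; move: t0; clear; lra.
Qed.

End Geo.

Section Iso.
Context {R : realType} {n : nat}.
Local Notation V := 'rV[R]_n.
Implicit Types u v w a b c p q x y : V.
Context (E : set V) (NE : forall q, exists y, nearest E q y).

Definition rpt x p (j : nat) : V := x + ((6/5 : R) ^+ j) *: (p - x).

Lemma rpt_norm x p j : enorm (rpt x p j - x) = (6/5 : R) ^+ j * enorm (p - x).
Proof. by rewrite /rpt addK_vec enormZ ger0_norm // exprn_ge0. Qed.

Lemma G5 x0 d0 x p B : FR E x0 d0 -> 0 < enorm (p - x) ->
  Good E p x (enorm (p - x) / 100) -> enorm (x - x0) + B < d0 ->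
  forall j, (6/5 : R) ^+ j * enorm (p - x) <= B ->
  Good E (rpt x p j) x ((6/5 : R) ^+ j * enorm (p - x) / 100).
Proof.
move=> fr rho0 Gp reg; elim => [_|j IH hj].
  by rewrite /rpt expr0 scale1r addrC subrK mul1r.
set rho := enorm (p - x) in rho0 Gp hj IH *.
set T := (6/5 : R) ^+ j in IH.
have T0 : 0 < T by rewrite exprn_gt0.
have hj' : T * (6/5) * rho <= B by rewrite -exprSr.
have tj : T * rho <= B by apply: le_trans hj'; rewrite ler_pM2r // ler_peMr //; lra.
have Gj := IH tj.
have hq : enorm (rpt x p j - x) = T * rho by rewrite rpt_norm.
have r1 : enorm (rpt x p j - x0) < d0.
  apply: (le_lt_trans (enorm_tri _ x _)); rewrite hq.
  move: tj reg; clear; lra.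
have TR : 0 < T * rho by rewrite mulr_gt0.
have r2 : T * rho / 100 < enorm (rpt x p j - x) by rewrite hq; move: TR; clear; lra.
have r3 : enorm (rpt x p j.+1 - rpt x p j) < (enorm (rpt x p j - x) - T * rho / 100) / 4.
  rewrite /rpt step_id enormZ exprSr -/T hq -{2}(mulr1 T) -mulrBr ger0_norm; last first.
    by rewrite mulr_ge0 // ?ltW //; lra.
  rewrite -/rho; move: TR; clear; nra.
have G := G1 E NE x0 d0 (rpt x p j) (rpt x p j.+1) x (T * rho / 100) fr r1 Gj r2 r3.
apply: Good_mono G _; rewrite hq exprSr -/T.
have A0 := Afz_gt0.
have : (T * rho + T * rho / 100) / Afz <= T * rho / 500.
  rewrite ler_pdivrMr // /Afz; move: TR; clear; lra.
move: TR; clear; lra.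
Qed.


Lemma enorm_gt0 (u : V) : u != 0 -> 0 < enorm u.
Proof.
move=> u0; rewrite lt0r enorm_ge0 andbT; apply/eqP => h.
by move/eqP: u0; apply; apply: enorm_eq0.
Qed.

Lemma ar_g6 (a b c t : R) : a <= b -> c <= t / 25 -> t <= a + c -> 24 * t / 25 <= b.
Proof. lra. Qed.

Lemma G6 c x t : 0 < t -> enorm (c - x) = t -> Good E c x (t / 25) ->
  forall e, E e -> 24 * t / 25 <= enorm (c - e).
Proof.
move=> t0 hc G e Ee.
have [y ny] := NE c.
have h1 := ny.2 e Ee.
have h2 := G y ny.
have h3 := enorm_tri c y x.
rewrite hc in h3; exact: ar_g6 h1 h2 h3.
Qed.

Lemma bern (k : nat) : 1 + k%:R / 5 <= (6/5 : R) ^+ k.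
Proof.
elim: k => [|k IH]; first by rewrite expr0 mul0r addr0.
rewrite exprSr -[k.+1]addn1 natrD.
have : 0 <= k%:R :> R by rewrite ler0n.
move: IH; nra.
Qed.

Lemma ar_afz (r : R) : 0 <= r -> r / Afz <= r / 100.
Proof. by rewrite /Afz => *; lra. Qed.

Lemma ar_iso1 (s rho ex s' L : R) : 0 < s -> rho < s / 10 -> ex < 2 * s / 10 ->
  s - ex <= s' -> L = s' * 10 / 19 -> rho <= L.
Proof. move=> *; lra. Qed.

Lemma ar_iso2 (s ex s' L t B d0 : R) : 0 < s -> ex < 2 * s / 10 -> s' <= s + ex ->
  L = s' * 10 / 19 -> t <= 6 / 5 * L -> B = 2 * s -> s < d0 / 32 ->
  t <= B /\ ex + B < d0 /\ ex + t < d0.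
Proof. move=> *; lra. Qed.

Lemma ar_iso3 (s' L t : R) : 0 < s' -> L = s' * 10 / 19 -> L < t -> t <= 6 / 5 * L ->
  `|t - s'| < 24 * t / 25.
Proof. move=> *; rewrite ltr_norml; apply/andP; split; lra. Qed.

Lemma Iso (x0 : V) d0 : (1 < n)%N -> E x0 -> 0 < d0 -> FR E x0 d0 ->
  (forall del, 0 < del -> exists p, ~ E p /\ enorm (p - x0) < del) ->
  forall e, E e -> enorm (e - x0) < d0 / 32 -> e = x0.
Proof.
move=> hn Ex0 d00 fr bd e Ee es.
apply/eqP/negPn/negP => ne.
have s0 : 0 < enorm (e - x0) by apply: enorm_gt0; rewrite subr_eq0.
set s := enorm (e - x0) in s0 es.
have s10 : 0 < s / 10 by rewrite divr_gt0.
have [p [nEp px0]] := bd (s / 10) s10.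
have [x nx] := NE p.
have Ex := nx.1.
set rho := enorm (p - x).
have rx0 : rho <= enorm (p - x0) := nx.2 x0 Ex0.
have rho0 : 0 < rho.
  apply: enorm_gt0; rewrite subr_eq0; apply/eqP => h; apply: nEp; by rewrite h.
have xx0 : enorm (x - x0) < 2 * s / 10.
  have := enorm_tri x p x0; rewrite (enormB x p) -/rho; move: rx0 px0; clear; lra.
set ex := enorm (x - x0) in xx0.
have sd : s / 10 < d0 by move: es s0; clear -d00; lra.
have Gp : Good E p x (rho / 100).
  move=> y ny.
  have h0 : enorm (p - p) < rho / 4 by rewrite enorm_subrr; apply: divr_gt0.
  have := fr p nEp (lt_trans px0 sd) x p y nx h0 ny.
  rewrite enormB -/rho => h; apply: (le_trans (ltW h)).
  exact: ar_afz (ltW rho0).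
set s' := enorm (e - x).
have s'lo : s - ex <= s'.
  have := enorm_tri e x x0; rewrite -/s -/s' -/ex; move: xx0; clear -s0; lra.
have s'hi : s' <= s + ex.
  have := enorm_tri e x0 x; rewrite -/s -/s' (enormB x0 x) -/ex; lra.
pose L := s' * 10 / 19.
have rL : rho <= L by apply: (ar_iso1 s rho ex s' L s0 (le_lt_trans rx0 px0) xx0 s'lo).
have exP : exists k, L < (6/5 : R) ^+ k * rho.
  have L0' : 0 <= L := le_trans (ltW rho0) rL.
  have L0 : 0 <= 5 * L / rho by apply: divr_ge0; [apply: mulr_ge0 | apply: ltW].
  exists (Num.bound (5 * L / rho)).
  have hb := archi_boundP L0.
  have := bern (Num.bound (5 * L / rho)).
  set K := (Num.bound (5 * L / rho))%:R => hK.
  have : 5 * L < K * rho by rewrite -ltr_pdivrMr.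
  move=> h; apply: (lt_le_trans _ (ler_wpM2r (ltW rho0) hK)).
  move: h rho0; clear -hb; nra.
case: (ex_minnP exP) => k Pk mink.
case: k Pk mink => [|k'] Pk mink.
  by move: Pk; rewrite expr0 mul1r ltNge rL.
have nP : ~~ (L < (6/5 : R) ^+ k' * rho).
  by apply/negP => /mink; rewrite ltnn.
rewrite -leNgt in nP.
set t := (6/5 : R) ^+ k'.+1 * rho in Pk.
have t65 : t <= 6 / 5 * L by rewrite /t exprS -mulrA ler_pM2l.
have [tB [reg reg2]] := ar_iso2 s ex s' L t (2 * s) d0 s0 xx0 s'hi erefl t65 erefl es.
have Ga := G5 x0 d0 x p (2 * s) fr rho0 Gp reg k'.+1 tB.
have t0 : 0 < t by rewrite /t mulr_gt0 // exprn_gt0.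
have s'0 : 0 < s' by move: s'lo xx0 s0; clear -s; lra.
pose c := x + (t / s') *: (e - x).
have hc : enorm (c - x) = t.
  rewrite /c addK_vec enormZ -/s' ger0_norm ?divr_ge0 ?ltW //.
  by rewrite -mulrA mulVf ?mulr1 // gt_eqF.
have ha : enorm (rpt x p k'.+1 - x) = t by rewrite rpt_norm.
have D0 : 0 <= t / 100 by rewrite divr_ge0 // ltW.
have Gc := G4 E NE x0 d0 x (rpt x p k'.+1) c t (t / 100) hn fr t0 ha hc Ga D0 (lexx _) reg2.
have Gc' : Good E c x (t / 25) by apply: Good_mono Gc _; move: t0; clear; lra.
have h24 := G6 c x t t0 hc Gc' e Ee.
have ce : c - e = (t / s' - 1) *: (e - x).
  by rewrite /c scalerBl scale1r opprB [x + _]addrC -addrA.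
have e1 : `|t / s' - 1| * s' = `|t - s'|.
  by rewrite -{2}(gtr0_norm s'0) -normrM mulrBl divfK ?gt_eqF // mul1r.
rewrite ce enormZ -/s' e1 in h24.
have := ar_iso3 s' L t s'0 erefl Pk t65.
by rewrite ltNge h24.
Qed.

End Iso.

Section Conf.
Context {R : realType} {n : nat}.
Local Notation V := 'rV[R]_n.
Implicit Types u v w a b c p q x y : V.

Lemma conv_id (x y p : V) (t : R) :
  (1 - t) *: x + t *: y - p = (1 - t) *: (x - p) + t *: (y - p).
Proof.
rewrite !scalerBr addrACA -opprD -scalerDl subrK scale1r //.
Qed.

Lemma conv_ball (x y p : V) (t rho : R) : 0 < t -> t < 1 -> enorm (x - p) <= rho ->
  enorm (y - p) < rho -> enorm ((1 - t) *: x + t *: y - p) < rho.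
Proof.
move=> t0 t1 hx hy; rewrite conv_id.
apply: (le_lt_trans (enormD _ _)); rewrite !enormZ !ger0_norm ?subr_ge0 ?ltW //.
have : (1 - t) * enorm (x - p) <= (1 - t) * rho by rewrite ler_pM2l // subr_gt0.
have : t * enorm (y - p) < t * rho by rewrite ltr_pM2l.
lra.
Qed.

Lemma conv_norm (x y : V) (t M : R) : 0 < t -> t < 1 -> enorm x < M -> enorm y < M ->
  enorm ((1 - t) *: x + t *: y) < M.
Proof.
move=> t0 t1 hx hy; have := conv_ball x y 0 t M t0 t1 _ _; rewrite !subr0; apply => //; exact: ltW.

Qed.


Lemma enorm_tri0 (u v : V) : enorm u <= enorm (u - v) + enorm v.
Proof. by have := enorm_tri u v 0; rewrite !subr0. Qed.

Lemma arith_conf (rho rho' r py pp p'x px del pn x0n xx0 yx0 xn yn : R) :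
  0 < rho -> rho <= px -> px < del -> del <= 1/16 ->
  rho' <= p'x -> p'x <= pp + rho -> rho <= py -> py <= pp + rho' -> r <= rho + py ->
  rho / Afz <= r -> pp < rho / 4 -> pn <= px + x0n -> x0n <= 1/4 ->
  xx0 <= rho + px -> yx0 <= py + px -> xn <= xx0 + x0n -> yn <= yx0 + x0n ->
  [/\ r / (2 * Afz) < rho, rho < (2 * Afz) * r, r / (2 * Afz) < py, py < (2 * Afz) * r &
   [/\ 1 / 10 * r < rho, 1 / 10 * r + pp < rho', 1 / 10 * r + pn < 1, xn < 1/2 &
   [/\ yn < 1/2, pn < 1/2, xx0 <= 3 * del, yx0 <= 3 * del & px <= 3 * del]]].
Proof.
rewrite /Afz => *.
have r0 : 0 < r by lra.
split; try lra; split; try lra; split; lra.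
Qed.

Lemma config_one (E : set V) x0 p x p' y (del : R) : E x0 -> enorm x0 <= 1/4 -> 0 < del ->
  del <= 1/16 -> ~ E p -> enorm (p - x0) < del -> nearest E p x ->
  enorm (p' - p) < enorm (p - x) / 4 -> nearest E p' y -> enorm (p - x) / Afz <= enorm (x - y) ->
  (eball 0 (1 / 2) x /\ eball 0 (1 / 2) y /\ eball 0 (1 / 2) p) /\
  (E x /\ E y /\ ~ E p) /\
  (euclid_dist x y / (2 * Afz) < euclid_dist x p /\ euclid_dist x p < (2 * Afz) * euclid_dist x y /\
   euclid_dist x y / (2 * Afz) < euclid_dist y p /\ euclid_dist y p < (2 * Afz) * euclid_dist x y) /\
  (Vcone x p (1 / 10 * euclid_dist x y) `<=` eball 0 1 `\` E /\
   Vcone y p (1 / 10 * euclid_dist x y) `<=` eball 0 1 `\` E) /\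
  (enorm (x - x0) <= 3 * del /\ enorm (y - x0) <= 3 * del /\ enorm (p - x0) <= 3 * del).
Proof.
move=> Ex0 x0n del0 del16 nEp px0 [Ex hx] pp' [Ey hy] hr.
have rho0 : 0 < enorm (p - x).
  rewrite lt0r enorm_ge0 andbT; apply/eqP => h; apply: nEp.
  by have := enorm_eq0 _ h; move/eqP; rewrite subr_eq0 => /eqP ->.
have rx0 := hx x0 Ex0.
have f1 := hy x Ex.
have f2 := enorm_tri p' p x.
have f3 := hx y Ey.
have f4 := enorm_tri p p' y.
rewrite (enormB p p') in f4.
have f5 := enorm_tri x p y.
rewrite (enormB x p) in f5.
have n1 := enorm_tri0 p x0.
have n2 := enorm_tri x p x0.
rewrite (enormB x p) in n2.
have n3 := enorm_tri y p x0.
rewrite (enormB y p) in n3.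
have n4 := enorm_tri0 x x0.
have n5 := enorm_tri0 y x0.

have [C1 C2 C3 C4 [C5 C6 C7 C8 [C9 C10 C11 C12 C13]]] :=
  arith_conf _ _ _ _ _ _ _ _ _ _ _ _ _ _ rho0 rx0 px0 del16 f1 f2 f3 f4 f5 hr pp' n1 x0n n2 n3 n4 n5.
rewrite /eball /euclid_dist /=.
rewrite !subr0 (enormB x p) (enormB y p).
split; first by [].
split; first by [].
split; first by [].
split; last by [].
split.
- move=> w [t [y'' [t0 [t1 [hy'' ->]]]]]; split.
    rewrite /eball /euclid_dist /= subr0; apply: conv_norm => //; first lra.
    rewrite /eball /euclid_dist /= in hy''.
    have := enorm_tri0 y'' p; lra.
  move=> Ew.
  have := hx _ Ew.
  have := conv_ball x y'' p t (enorm (p - x)) t0 t1.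
  rewrite (enormB x p) lexx => /(_ isT).
  rewrite /eball /euclid_dist /= in hy''.
  have : enorm (y'' - p) < enorm (p - x) by lra.
  move=> h /(_ h); rewrite (enormB p ((1 - t) *: x + t *: y'')); lra.
- move=> w [t [y'' [t0 [t1 [hy'' ->]]]]]; split.
    rewrite /eball /euclid_dist /= subr0; apply: conv_norm => //; first lra.
    rewrite /eball /euclid_dist /= in hy''.
    have := enorm_tri0 y'' p; lra.
  move=> Ew.
  have := hy _ Ew.
  have := conv_ball y y'' p' t (enorm (p' - y)) t0 t1.
  rewrite (enormB y p') lexx => /(_ isT).
  rewrite /eball /euclid_dist /= in hy''.
  have := enorm_tri y'' p p'.
  rewrite (enormB p p').
  move=> h1.
  have : enorm (y'' - p') < enorm (p' - y) by lra.
  move=> h /(_ h); rewrite (enormB p' ((1 - t) *: y + t *: y'')); lra.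
Qed.

End Conf.

Section Seq.
Context {R : realType} {n : nat}.
Local Notation V := 'rV[R]_n.

Definition delk (k : nat) : R := 1 / (16 * (k.+1)%:R).

Lemma delk_gt0 k : 0 < delk k.
Proof. by rewrite /delk divr_gt0 // mulr_gt0 // ltr0n. Qed.

Lemma delk_le k : delk k <= 1/16.
Proof.
rewrite /delk ler_pdivrMr ?mulr_gt0 ?ltr0n // mulrA.
have : 1 <= (k.+1)%:R :> R by rewrite ler1n.
lra.
Qed.

Lemma delk3 k : 3 * delk k = (3 / 16) / (k.+1)%:R.
Proof.
by rewrite /delk; field; rewrite gt_eqF.
Qed.

Lemma config_seq (E : set V) (x0 : V) : E x0 -> enorm x0 <= 1/4 ->
  (forall k : nat, exists p, ~ E p /\ enorm (p - x0) < delk k /\ ~ frozen_at E p) ->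
  exists (x0 : 'rV[R]_n) (x y z : nat -> 'rV[R]_n) (a beta : R),
        1 < a /\ 0 < beta /\
        (forall k, eball 0 (1 / 2) (x k) /\ eball 0 (1 / 2) (y k)
                   /\ eball 0 (1 / 2) (z k)) /\
        (forall k, E (x k) /\ E (y k) /\ ~ E (z k)) /\
        x @ \oo --> x0 /\ y @ \oo --> x0 /\ z @ \oo --> x0 /\
        (forall k, euclid_dist (x k) (y k) / a < euclid_dist (x k) (z k) /\ euclid_dist (x k) (z k) < a * euclid_dist (x k) (y k) /\
           euclid_dist (x k) (y k) / a < euclid_dist (y k) (z k) /\ euclid_dist (y k) (z k) < a * euclid_dist (x k) (y k)) /\
        (forall k,
           Vcone (x k) (z k) (beta * euclid_dist (x k) (y k)) `<=` eball 0 1 `\` E /\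
           Vcone (y k) (z k) (beta * euclid_dist (x k) (y k)) `<=` eball 0 1 `\` E).
Proof.
move=> Ex0 x0n H.
have H' : forall k, exists w : V * V * V * V,
    ~ E w.1.1.1 /\ enorm (w.1.1.1 - x0) < delk k /\ nearest E w.1.1.1 w.1.1.2 /\
    enorm (w.1.2 - w.1.1.1) < enorm (w.1.1.1 - w.1.1.2) / 4 /\ nearest E w.1.2 w.2 /\
    enorm (w.1.1.1 - w.1.1.2) / Afz <= enorm (w.1.1.2 - w.2).
  move=> k; have [p [nEp [px0 nf]]] := H k.
  move/existsNP: nf => [x /existsNP [p' /existsNP [y]]].
  move/not_implyP => [nx /not_implyP [pp /not_implyP [ny hlt]]].
  exists (p, x, p', y); split => //; split => //; split => //; split => //; split => //.
  by rewrite leNgt; apply/negP.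
have [f hf] := choice H'.
pose P k := (f k).1.1.1; pose X k := (f k).1.1.2; pose Y k := (f k).2.
have C : forall k, _ := fun k =>
  let: conj h1 (conj h2 (conj h3 (conj h4 (conj h5 h6)))) := hf k in
  config_one E x0 (P k) (X k) (f k).1.2 (Y k) (delk k) Ex0 x0n (delk_gt0 k) (delk_le k)
    h1 h2 h3 h4 h5 h6.
exists x0, X, Y, P, (2 * Afz), (1 / 10).
split; first by rewrite /Afz; lra.
split; first by lra.
split; first by move=> k; have [h _] := C k.
split; first by move=> k; have [_ [h _]] := C k.
split.
  apply: (ecvg _ _ (3 / 16)) => k; rewrite -delk3.
  by have [_ [_ [_ [_ [h _]]]]] := C k.
split.
  apply: (ecvg _ _ (3 / 16)) => k; rewrite -delk3.
  by have [_ [_ [_ [_ [_ [h _]]]]]] := C k.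
split.
  apply: (ecvg _ _ (3 / 16)) => k; rewrite -delk3.
  by have [_ [_ [_ [_ [_ [_ h]]]]]] := C k.
split; first by move=> k; have [_ [_ [h _]]] := C k.
by move=> k; have [_ [_ [_ [h _]]]] := C k.
Qed.

End Seq.

Section Seg.
Context {R : realType} {n : nat}.
Local Notation V := 'rV[R]_n.

Lemma theta_facts (a c : R) : 0 < a -> 0 < c ->
  0 < a * c / (a + c) /\ a * c / (a + c) < a /\ a * c / (a + c) < c.
Proof.
move=> a0 c0; have ac : 0 < a + c by rewrite addr_gt0.
split; first by rewrite divr_gt0 // mulr_gt0.
split; rewrite ltr_pdivrMr //; nra.
Qed.

Definition gam (x0 q : V) (s : R) : V := x0 + s *: (q - x0).

Lemma gam_dist x0 q s s' : enorm (gam x0 q s - gam x0 q s') = `|s - s'| * enorm (q - x0).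
Proof. by rewrite /gam step_id enormZ. Qed.

Lemma gam0 x0 q : gam x0 q 0 = x0.
Proof. by rewrite /gam scale0r addr0. Qed.

Lemma gam1 x0 q : gam x0 q 1 = q.
Proof. by rewrite /gam scale1r addrC subrK. Qed.

Lemma gam_norm x0 q s : 0 <= s <= 1 -> enorm (gam x0 q s) <= (1 - s) * enorm x0 + s * enorm q.
Proof.
move=> /andP[s0 s1].
have -> : gam x0 q s = (1 - s) *: x0 + s *: q.
  by rewrite /gam scalerBr scalerBl scale1r addrAC addrA.
apply: (le_trans (enormD _ _)); rewrite !enormZ !ger0_norm ?subr_ge0 //.
Qed.

Lemma int_case (E : set V) (x0 q : V) (del : R) : closed E -> E x0 -> enorm x0 <= 1/4 ->
  enorm q < 1/4 -> ~ E q -> 0 < del -> (forall p, enorm (p - x0) < del -> E p) ->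
  exists b, [/\ E b, enorm b <= 1/4,
    (forall d, 0 < d -> exists p, ~ E p /\ enorm (p - b) < d) &
    (forall r, 0 < r -> exists e, [/\ E e, e != b & enorm (e - b) < r])].
Proof.
move=> Ecl Ex0 x0n qn nEq del0 hdel.
set Q := enorm (q - x0).
have Q0 : 0 < Q.
  rewrite lt0r enorm_ge0 andbT; apply/eqP => h; apply: nEq.
  by have := enorm_eq0 _ h; move/eqP; rewrite subr_eq0 => /eqP ->.
have Q1 : Q < 1/2 by have := enorm_tri q 0 x0; rewrite subr0 sub0r enormN -/Q; lra.
pose S := [set s : R | (0 <= s <= 1) /\ forall s', 0 <= s' <= s -> E (gam x0 q s')].
have S0 : S 0.
  split; first by rewrite lexx ler01.
  move=> s' /andP [h1 h2]; have -> : s' = 0 by apply/eqP; rewrite eq_le h1 h2.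
  by rewrite gam0.
have ub1 : ubound S 1 by move=> s [/andP[_ h] _].
have hS : has_sup S by split; [exists 0 | exists 1].
set ts := sup S.
have ts1 : ts <= 1 by apply: ge_sup => //; exists 0.
have supS := sup_upper_bound hS.
have below : forall s, 0 <= s -> s < ts -> E (gam x0 q s).
  move=> s s0 sts.
  have e0 : 0 < ts - s by rewrite subr_gt0.
  have [s'' [_ hs''] lt] := sup_adherent e0 hS.
  apply: hs''; rewrite s0 /=; apply: ltW; move: lt; rewrite -/ts; lra.
have ts0 : 0 < ts.
  pose s0 := del / (1 + del).
  have [h1 [h2 h3]] := theta_facts 1 del ltr01 del0.
  rewrite mul1r in h1 h2 h3.
  have Ss0 : S s0.
    split; first by rewrite ltW //= ltW.
    move=> s' /andP[s'0 s's0]; apply: hdel.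
    have := gam_dist x0 q s' 0; rewrite gam0 subr0 => ->.
    rewrite ger0_norm // -/Q.
    have : s' * Q <= s0 * Q by rewrite ler_pM2r.
    have : s0 * Q < s0 * 1 by rewrite ltr_pM2l //; lra.
    rewrite /s0; lra.
  by apply: (lt_le_trans h1); apply: supS.
have Eb : E (gam x0 q ts).
  apply: (eclosed_lim E _ Ecl) => eps eps0.
  have [h1 [h2 h3]] := theta_facts ts eps ts0 eps0.
  set th := ts * eps / (ts + eps) in h1 h2 h3.
  exists (gam x0 q (ts - th)); split; first by apply: below; lra.
  rewrite gam_dist (_ : ts - th - ts = - th); last by ring.
  rewrite normrN ger0_norm ?ltW // -/Q.
  have : th * Q < th * 1 by rewrite ltr_pM2l //; lra.
  lra.
have ts_lt1 : ts < 1.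
  rewrite lt_neqAle ts1 andbT; apply/eqP => h; apply: nEq.
  by rewrite -(gam1 x0 q) -h.
exists (gam x0 q ts); split => //.
- apply: (le_trans (gam_norm _ _ _ _)); first by rewrite ltW.
  have : (1 - ts) * enorm x0 <= (1 - ts) * (1/4) by rewrite ler_pM2l // subr_gt0.
  have : ts * enorm q <= ts * (1/4) by rewrite ler_pM2l // ltW.
  lra.
- move=> d d0.
  have t1 : 0 < 1 - ts by rewrite subr_gt0.
  have [h1 [h2 h3]] := theta_facts (1 - ts) d t1 d0.
  set th := (1 - ts) * d / (1 - ts + d) in h1 h2 h3.
  have nS : ~ S (ts + th).
    move=> /supS; rewrite -/ts; lra.
  have [s' [/andP [s'0 s'le] nE]] : exists s', (0 <= s' <= ts + th) /\ ~ E (gam x0 q s').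
    apply: contrapT => hn; apply: nS; split.
      apply/andP; split; lra.
    move=> s' hs'; apply: contrapT => nE; apply: hn; exists s'; split => //.
  have s'ts : ts < s'.
    rewrite ltNge; apply/negP => h.
    move: h; rewrite le_eqVlt => /orP [/eqP h|h].
      by apply: nE; rewrite h.
    by apply: nE; apply: below.
  exists (gam x0 q s'); split => //.
  rewrite gam_dist ger0_norm ?subr_ge0 ?ltW // -/Q.
  have : (s' - ts) * Q <= th * Q by rewrite ler_pM2r //; lra.
  have : th * Q < th * 1 by rewrite ltr_pM2l //; lra.
  lra.
- move=> r r0.
  have [h1 [h2 h3]] := theta_facts ts r ts0 r0.
  set th := ts * r / (ts + r) in h1 h2 h3.
  exists (gam x0 q (ts - th)); split.
  + by apply: below; lra.
  + apply/negP => /eqP h.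
    have := gam_dist x0 q (ts - th) ts; rewrite h enorm_subrr.
    rewrite (_ : ts - th - ts = - th); last by ring.
    rewrite normrN ger0_norm ?ltW // -/Q => /esym/eqP; rewrite mulf_eq0 !gt_eqF //.
  + rewrite gam_dist (_ : ts - th - ts = - th); last by ring.
    rewrite normrN ger0_norm ?ltW // -/Q.
    have : th * Q < th * 1 by rewrite ltr_pM2l //; lra.
    lra.
Qed.

End Seg.

Lemma all_iso (R : realType) (n : nat) (E : set 'rV[R]_n) :
  (1 < n)%N -> closed E -> (forall q, exists y, nearest E q y) ->
  (exists q, enorm q < 1/4 /\ ~ E q) ->
  ~ (exists (x0 : 'rV[R]_n) (x y z : nat -> 'rV[R]_n) (a beta : R),
        1 < a /\ 0 < beta /\
        (forall k, eball 0 (1 / 2) (x k) /\ eball 0 (1 / 2) (y k)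
                   /\ eball 0 (1 / 2) (z k)) /\
        (forall k, E (x k) /\ E (y k) /\ ~ E (z k)) /\
        x @ \oo --> x0 /\ y @ \oo --> x0 /\ z @ \oo --> x0 /\
        (forall k, euclid_dist (x k) (y k) / a < euclid_dist (x k) (z k) /\ euclid_dist (x k) (z k) < a * euclid_dist (x k) (y k) /\
           euclid_dist (x k) (y k) / a < euclid_dist (y k) (z k) /\ euclid_dist (y k) (z k) < a * euclid_dist (x k) (y k)) /\
        (forall k,
           Vcone (x k) (z k) (beta * euclid_dist (x k) (y k)) `<=` eball 0 1 `\` E /\
           Vcone (y k) (z k) (beta * euclid_dist (x k) (y k)) `<=` eball 0 1 `\` E)) ->
  forall x0, E x0 -> enorm x0 <= 1/4 ->
  exists2 r, 0 < r & forall e, E e -> enorm (e - x0) < r -> e = x0.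
Proof.
move=> hn Ecl NE [q [qn nEq]] NC.
have bdry : forall x0, E x0 -> enorm x0 <= 1/4 ->
    (forall del, 0 < del -> exists p, ~ E p /\ enorm (p - x0) < del) ->
    exists2 r, 0 < r & forall e, E e -> enorm (e - x0) < r -> e = x0.
  move=> x0 Ex0 x0n bd.
  have [[d0 d00 fr]|nfr] := pselect (exists2 d0, 0 < d0 & FR E x0 d0).
    exists (d0 / 32); first by rewrite divr_gt0.
    exact: Iso E NE x0 d0 hn Ex0 d00 fr bd.
  exfalso; apply: NC; apply: (config_seq E x0 Ex0 x0n) => k.
  have : ~ FR E x0 (delk k).
    by move=> fr; apply: nfr; exists (delk k) => //; exact: delk_gt0.
  move/existsNP => [p /not_implyP [nEp /not_implyP [px0 nf]]].
  by exists p.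
move=> x0 Ex0 x0n.
have [bd|nbd] := pselect (forall del, 0 < del -> exists p, ~ E p /\ enorm (p - x0) < del).
  exact: bdry.
exfalso.
move/existsNP: nbd => [del /not_implyP [del0 hdel]].
have hdel' : forall p, enorm (p - x0) < del -> E p.
  move=> p hp; apply: contrapT => nEp; apply: hdel; by exists p.
have [b [Eb bn bbd bacc]] := int_case E x0 q del Ecl Ex0 x0n qn nEq del0 hdel'.
have [r r0 hr] := bdry b Eb bn bbd.
have [e [Ee neb eb]] := bacc r r0.
by move/eqP: neb; apply; apply: hr.
Qed.

From mathcomp Require Import finmap.

Theorem lemma4p1 (R : realType) (n : nat) (E : set 'rV[R]_n) :
  (3 <= n)%N ->
  closed E ->
  E `<=` eball 0 1 ->
  E 0 ->
  eball 0 (1 / 4) `\` E !=set0 ->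
  ~ (exists (x0 : 'rV[R]_n) (x y z : nat -> 'rV[R]_n) (a beta : R),
        1 < a /\ 0 < beta /\
        (forall k, eball 0 (1 / 2) (x k) /\ eball 0 (1 / 2) (y k)
                   /\ eball 0 (1 / 2) (z k)) /\
        (forall k, E (x k) /\ E (y k) /\ ~ E (z k)) /\
        x @ \oo --> x0 /\ y @ \oo --> x0 /\ z @ \oo --> x0 /\
        (forall k, euclid_dist (x k) (y k) / a < euclid_dist (x k) (z k) /\ euclid_dist (x k) (z k) < a * euclid_dist (x k) (y k) /\
           euclid_dist (x k) (y k) / a < euclid_dist (y k) (z k) /\ euclid_dist (y k) (z k) < a * euclid_dist (x k) (y k)) /\
        (forall k,
           Vcone (x k) (z k) (beta * euclid_dist (x k) (y k)) `<=` eball 0 1 `\` E /\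
           Vcone (y k) (z k) (beta * euclid_dist (x k) (y k)) `<=` eball 0 1 `\` E)) ->
  finite_set (E `&` eball 0 (1 / 4)).
Proof.
move=> hn3 Ecl Eb E0 [q0 [q0n nEq0]] NC.
have hn : (1 < n)%N by apply: leq_trans hn3.
have E0' : E !=set0 by exists 0.
have NE : forall q, exists y, nearest E q y.
  by move=> q; apply: nearest_ex.
have q0n' : enorm q0 < 1/4 by move: q0n; rewrite /eball /euclid_dist /= subr0.
have iso := all_iso R n E hn Ecl NE (ex_intro _ q0 (conj q0n' nEq0)) NC.
have H0 : forall e : 'rV[R]_n, exists r : R, E e -> enorm e <= 1/4 ->
    0 < r /\ forall e', E e' -> enorm (e' - e) < r -> e' = e.
  move=> e.
  have [[Ee en]|ne] := pselect (E e /\ enorm e <= 1/4).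
    have [r r0 hr] := iso e Ee en.
    by exists r.
  by exists 1 => Ee en; exfalso; apply: ne.
have [rf hrf] := boolp.choice H0.
have bE : bounded_set E.
  exists 1; split => // M M1 x Ex /=.
  apply: (le_trans (mx_le_enorm x)); apply/ltW/(lt_trans _ M1).
  by move/Eb: Ex; rewrite /eball /euclid_dist /= subr0.
have cE := bounded_closed_compact bE Ecl.
rewrite compact_cover in cE.
pose D : set (option 'rV[R]_n) :=
  [set i | if i is Some e then E e /\ enorm e <= 1/4 else True].
pose f : option 'rV[R]_n -> set 'rV[R]_n :=
  fun i => if i is Some e then [set w | enorm (w - e) < rf e] else [set w | 1/4 < enorm w].
have fop : forall i, D i -> open (f i).
  case => [e [Ee en]|_] /=; apply: eopen => w /= hw.
    exists (rf e - enorm (w - e)); first by rewrite subr_gt0.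
    move=> w' hw'; have := enorm_tri w' w e; lra.
  exists (enorm w - 1/4); first by rewrite subr_gt0.
  move=> w' hw'; have := enorm_tri0 w w'; rewrite (enormB w w'); lra.
have fcov : E `<=` cover D f.
  move=> w Ew.
  have [wn|wn] := leP (enorm w) (1/4).
    exists (Some w) => //=; rewrite enorm_subrr; by have [] := hrf w Ew wn.
  by exists None.
have [D' D'D cov] := cE _ D f fop fcov.
have fin : finite_set ((fun i : option 'rV[R]_n => odflt 0 i) @` [set` D']).
  by apply: finite_image; exact: finite_fset.
suff sub : E `&` eball 0 (1 / 4) `<=` ((fun i : option 'rV[R]_n => odflt 0 i) @` [set` D']).
  exact: sub_finite_set sub fin.
move=> w [Ew wn].
have wn' : enorm w < 1/4 by move: wn; rewrite /eball /euclid_dist /= subr0.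
have [i iD' fiw] := cov w Ew.
case: i iD' fiw => [e|] iD' /= fiw; last by move: fiw wn'; lra.
have /set_mem [Ee en] : Some e \in D := D'D _ iD'.
have [_ he] := hrf e Ee en.
exists (Some e) => //=; exact: esym (he w Ew fiw).
Qed.
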